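(* Let $(Q,\cdot)$ be a quasigroup and $e\in Q$ an element such that $(ee\cdot xz)(ey\cdot z)=xy$ for all $x,y,z\in Q$. Then for all $x,y,z\in Q$: (1) $ee=e$; (2) $ex=xe$; (3) $ex\cdot ey=e\cdot yx$; (4) $e(ey\cdot ex)=xy$; (5) $(e\cdot xz)(ey\cdot z)=xy$; (6) $x\cdot xe=ex\cdot x=e$; (7) $xy\cdot x=x\cdot yx=y$.
   Context: A quasigroup is a magma in which $ax=b$ and $ya=b$ have unique solutions for all $a,b$. Juxtaposition denotes the operation, and $ab\cdot cd$ means $(ab)(cd)$. Such $(Q,\cdot,e)$ is called a double Ward quasigroup. *)

(* Defs.v *)
Definition is_quasigroup {Q : Type} (mul : Q -> Q -> Q) : Prop :=
  (forall a b : Q, exists! x : Q, mul a x = b) /\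
  (forall a b : Q, exists! y : Q, mul y a = b).

(* Main.v *)
Require Import Defs.

Theorem lemma4p1 (Q : Type) (mul : Q -> Q -> Q) (e : Q)
  (hQ : is_quasigroup mul)
  (hW : forall x y z : Q,
      mul (mul (mul e e) (mul x z)) (mul (mul e y) z) = mul x y) :
  mul e e = e /\
  (forall x : Q, mul e x = mul x e) /\
  (forall x y : Q, mul (mul e x) (mul e y) = mul e (mul y x)) /\
  (forall x y : Q, mul e (mul (mul e y) (mul e x)) = mul x y) /\
  (forall x y z : Q, mul (mul e (mul x z)) (mul (mul e y) z) = mul x y) /\
  (forall x : Q, mul x (mul x e) = e /\ mul (mul e x) x = e) /\
  (forall x y : Q, mul (mul x y) x = y /\ mul x (mul y x) = y).
Proof.
  destruct hQ as [hL hR].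
  assert (lc : forall a x y, mul a x = mul a y -> x = y).
  { intros a x y H. destruct (hL a (mul a x)) as [u [_ Hu]].
    rewrite <- (Hu x eq_refl). apply Hu. symmetry; exact H. }
  assert (ex : forall a b, exists x, mul a x = b).
  { intros a b. destruct (hL a b) as [u [Hu _]]. eauto. }
  assert (Hee : mul e e = e).
  { set (f := mul e e) in *.
    destruct (ex e e) as [y0 Hy0].
    pose proof (hW e y0 e) as H0. rewrite Hy0 in H0. fold f in H0.
    (* (f f) f = e *)
    destruct (ex f f) as [z0 Hz0].
    pose proof (hW f e z0) as H1. fold f in H1. rewrite Hz0 in H1.
    rewrite H0 in H1. (* e = f e *)
    destruct (ex f e) as [z1 Hz1].
    pose proof (hW f e z1) as H2. fold f in H2. rewrite Hz1 in H2.
    rewrite <- H1 in H2. exact H2. }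
  rewrite Hee in hW.
  assert (C : forall v, mul (mul e v) v = e).
  { intro v. destruct (ex e v) as [z Hz]. pose proof (hW e e z) as H.
    rewrite Hee, Hz in H. exact H. }
  assert (E : forall y z, mul e (mul (mul e y) z) = mul (mul e z) y).
  { intros y z. pose proof (hW (mul e z) y z) as H. rewrite C, Hee in H. exact H. }
  assert (RE : forall y, mul (mul e y) e = y).
  { intro y. apply (lc e). pose proof (hW e y e) as H. rewrite Hee, Hee in H. exact H. }
  assert (EE : forall z, mul e (mul e z) = z).
  { intro z. pose proof (E e z) as H. rewrite Hee, RE in H. exact H. }
  assert (Cm : forall x, mul e x = mul x e).
  { intro x. symmetry. transitivity (mul (mul e (mul e x)) e). now rewrite EE. apply RE. }
  assert (F4 : forall x y, mul e (mul (mul e y) (mul e x)) = mul x y).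
  { intros x y. rewrite E, EE. reflexivity. }
  assert (F3 : forall x y, mul (mul e x) (mul e y) = mul e (mul y x)).
  { intros x y. rewrite <- (F4 y x), EE. reflexivity. }
  assert (B : forall y z, mul z (mul y z) = y).
  { intros y z. pose proof (hW e (mul e y) z) as H. rewrite !EE in H. exact H. }
  split; [exact Hee|]. split; [exact Cm|]. split; [exact F3|].
  split; [exact F4|]. split; [exact hW|].
  split.
  - intro x. split; [rewrite <- Cm; apply B | apply C].
  - intros x y. split; [|apply B]. apply (lc x). apply B.
Qed.
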